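(* Let $n\ge 3$, let $\mathcal{S}\subseteq(\mathbb{C}^d)^{\otimes n}$ be the permutation-symmetric subspace, and let $X,Y$ be $d\times d$ complex matrices. Suppose $|\psi\rangle\in\mathcal{S}$, $X_{(1)}|\psi\rangle\in\mathcal{S}$ and $Y_{(2)}|\psi\rangle\in\mathcal{S}$. Then $[X_{(1)},Y_{(1)}]|\psi\rangle=0$.
   Context: $\mathcal{S}$ is the set of vectors in $(\mathbb{C}^d)^{\otimes n}$ invariant under all permutations of the $n$ tensor factors. For a $d\times d$ matrix $X$ and $1\le k\le n$, $X_{(k)}$ denotes the operator on $(\mathbb{C}^d)^{\otimes n}$ acting as $X$ on the $k$-th tensor factor and as the identity on all others. $[P,Q]=PQ-QP$. *)

(* Defs.v *)
From HB Require Import structures.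
From mathcomp Require Import all_boot all_order all_algebra all_fingroup.
From mathcomp Require Import complex.
From mathcomp Require Import reals.
Set Implicit Arguments. Unset Strict Implicit. Unset Printing Implicit Defensive.
Import Order.TTheory GRing.Theory Num.Theory.
Local Open Scope ring_scope.

Definition multi_index (n d : nat) := {ffun 'I_n -> 'I_d}.

(* Vectors of (K^d)^{(x)n}, in coordinates w.r.t. the product basis. *)
Definition tensor_space (K : Type) (n d : nat) := {ffun multi_index n d -> K}.

Definition set_index (n d : nat) (i : multi_index n d) (k : 'I_n) (j : 'I_d)
  : multi_index n d := [ffun m => if m == k then j else i m].

Definition perm_index (n d : nat) (s : 'S_n) (i : multi_index n d)
  : multi_index n d := [ffun m => i (s m)].

Definition in_sym_subspace (K : Type) (n d : nat) (psi : tensor_space K n d) : Prop :=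
  forall (s : 'S_n) (i : multi_index n d), psi (perm_index s i) = psi i.

Definition act_on (K : nzRingType) (n d : nat) (k : 'I_n) (X : 'M[K]_d)
  (psi : tensor_space K n d) : tensor_space K n d :=
  [ffun i : multi_index n d => \sum_(j < d) X (i k) j * psi (set_index i k j)].

(* Main.v *)
Require Import Defs.
From HB Require Import structures.
From mathcomp Require Import all_boot all_order all_algebra all_fingroup.
From mathcomp Require Import complex.
From mathcomp Require Import reals.
Import GRing.Theory.
Local Open Scope ring_scope.

Lemma perm_set_index (n d : nat) (k l : 'I_n) (i : multi_index n d) j :
  perm_index (tperm k l) (set_index i l j) = set_index (perm_index (tperm k l) i) k j.
Proof.
apply/ffunP=> m; rewrite !ffunE.
case: (eqVneq m k) => [->|hmk]; first by rewrite tpermL eqxx.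
case: (eqVneq m l) => [eml|hml].
  rewrite eml tpermR; case: eqP => // e.
  by move: hmk; rewrite eml -e eqxx.
rewrite tpermD; last 2 first.
- by rewrite eq_sym.
- by rewrite eq_sym.
by rewrite (negbTE hml).
Qed.

Lemma act_swap (K : nzRingType) (n d : nat) (k l : 'I_n) (X : 'M[K]_d)
  (psi : tensor_space K n d) :
  (forall i, psi (perm_index (tperm k l) i) = psi i) ->
  (forall i, act_on k X psi (perm_index (tperm k l) i) = act_on k X psi i) ->
  act_on l X psi = act_on k X psi.
Proof.
move=> Hp Hq; apply/ffunP=> i.
rewrite -Hq !ffunE; apply: eq_bigr => j _.
by rewrite -Hp perm_set_index tpermL.
Qed.

Lemma set_index_comm (n d : nat) (k l : 'I_n) (i : multi_index n d) a b :
  k != l -> set_index (set_index i k a) l b = set_index (set_index i l b) k a.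
Proof.
move=> hkl; apply/ffunP=> m; rewrite !ffunE.
case: (m =P l) => [->|_]; last by [].
by rewrite eq_sym (negbTE hkl).
Qed.

Lemma act_comm (K : comNzRingType) (n d : nat) (k l : 'I_n) (X Y : 'M[K]_d)
  (psi : tensor_space K n d) : k != l ->
  act_on k X (act_on l Y psi) = act_on l Y (act_on k X psi).
Proof.
move=> hkl; apply/ffunP=> i; rewrite !ffunE.
under eq_bigr => j _ do rewrite ffunE big_distrr.
rewrite exchange_big /=; apply: eq_bigr => b _.
rewrite ffunE big_distrr; apply: eq_bigr => a _.
rewrite /= !ffunE (eq_sym l k) (negbTE hkl) set_index_comm //.
by rewrite !mulrA (mulrC (X _ _)).
Qed.

Theorem lemma3 (R : realType) (n d : nat) (hn : (3 <= n)%N)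
  (k1 k2 : 'I_n) (hk1 : nat_of_ord k1 = 0%N) (hk2 : nat_of_ord k2 = 1%N)
  (X Y : 'M[R[i]]_d) (psi : tensor_space R[i] n d) :
  in_sym_subspace psi ->
  in_sym_subspace (act_on k1 X psi) ->
  in_sym_subspace (act_on k2 Y psi) ->
  act_on k1 X (act_on k1 Y psi) - act_on k1 Y (act_on k1 X psi) = 0.
Proof.
move=> Hp HX HY.
have h2 : (2 < n)%N by [].
pose k3 := Ordinal h2.
have n12 : k1 != k2 by apply/eqP=> e; move: hk1; rewrite e hk2.
have n13 : k1 != k3 by apply/eqP=> e; move: hk1; rewrite e.
have n23 : k2 != k3 by apply/eqP=> e; move: hk2; rewrite e.
have EY : act_on k1 Y psi = act_on k2 Y psi.
  apply: act_swap => i; first by rewrite Hp.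
  by rewrite tpermC HY.
have EX : act_on k1 X psi = act_on k3 X psi.
  by symmetry; apply: act_swap => i; [rewrite Hp|rewrite HX].
have n32 : k3 != k2 by rewrite eq_sym.
have n31 : k3 != k1 by rewrite eq_sym.
rewrite {1}EY (@act_comm _ _ _ k1 k2 X Y psi n12) EX.
rewrite -(@act_comm _ _ _ k3 k2 X Y psi n32) -(@act_comm _ _ _ k3 k1 X Y psi n31).
have H : forall (a b : tensor_space R[i] n d), a = b -> a - b = 0.
  by move=> a b ->; rewrite subrr.
apply: H. congr act_on. exact: (esym EY). Qed.
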